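(* Let $S$ be a finite $p$-group for an odd prime $p$. Then $|J(S)\mathfrak{X}(S):\mathfrak{X}(S)|\neq p$.
   Context: For a finite $p$-group $G$ and subgroups $A,B$, write $[A,B;1]=[A,B]$ and $[A,B;k]=[[A,B;k-1],B]$. $\Omega_1(G)$ denotes the subgroup generated by the elements of order $p$ in $G$. The Oliver subgroup $\mathfrak{X}(G)$ of a finite $p$-group $G$ is the unique largest normal subgroup $K$ of $G$ admitting a chain $1=Q_0\leq Q_1\leq\cdots\leq Q_n=K$ of normal subgroups $Q_i\unlhd G$ such that $[\Omega_1(C_G(Q_{i-1})),Q_i;p-1]=1$ for each $1\leq i\leq n$. $J(S)$ is the Thompson subgroup of $S$: the subgroup generated by all elementary abelian $p$-subgroups of $S$ whose rank equals the $p$-rank of $S$ (the largest rank of an elementary abelian $p$-subgroup of $S$). *)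

(* Defs.v *)
From mathcomp Require Import all_boot all_fingroup all_solvable.
From Stdlib Require Import ClassicalDescription.
Set Implicit Arguments. Unset Strict Implicit. Unset Printing Implicit Defensive.
Local Open Scope group_scope.

Section Defs.
Variable gT : finGroupType.
Implicit Types (A B : {set gT}) (G K L : {group gT}).

(* [A, B; k] with [A,B;1] = [A,B] and [A,B;k] = [[A,B;k-1],B];
   (iter_comm A B 0 = A, so iter_comm A B k = [A,B;k] for k >= 1). *)
Fixpoint iter_comm A B (k : nat) : {set gT} :=
  if k is k'.+1 then [~: iter_comm A B k', B] else A.

Definition Omega1 (p : nat) A : {set gT} := <<[set x in A | #[x] == p]>>.

Definition oliver_step (p : nat) A (L K : {group gT}) : bool :=
  (L \subset K) && (iter_comm (Omega1 p 'C_A(L)) K p.-1 == 1).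

(* K admits a chain 1 = Q_0 <= Q_1 <= ... <= Q_n = K of normal subgroups
   of G with [Omega_1(C_G(Q_{i-1})), Q_i; p-1] = 1 for all 1 <= i <= n. *)
Definition oliver_admissible (p : nat) (G K : {group gT}) : Prop :=
  exists s : seq {group gT},
    [&& all (fun Q : {group gT} => Q <| G) s,
        path (oliver_step p G) 1%G s & last 1%G s == K].

Definition oliver_admissibleb p G K : bool :=
  if excluded_middle_informative (oliver_admissible p G K) then true else false.

(* The Oliver subgroup X(G): the subgroup generated by all normal subgroups
   admitting such a chain (this is the unique largest one). *)
Definition oliver_subgroup (p : nat) (G : {group gT}) : {set gT} :=
  <<\bigcup_(K : {group gT} | oliver_admissibleb p G K) K>>.

Definition thompson_J (p : nat) (S : {group gT}) : {set gT} :=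
  <<\bigcup_(E in 'E_p^('r_p(S))(S)) E>>.
End Defs.

(* Main.v *)
Require Import Defs.
From mathcomp Require Import all_boot all_fingroup all_solvable.
From Stdlib Require Import ClassicalDescription.
Set Implicit Arguments. Unset Strict Implicit. Unset Printing Implicit Defensive.
Local Open Scope group_scope.

Lemma C1 (gT : finGroupType) (H K R : {set gT}) :
  H \subset 'C(K) -> [~: H, K * R] \subset [~: H, R].
Proof.
move=> sHC; rewrite gen_subG; apply/subsetP => _ /imset2P [h y hH yKR ->].
case/mulsgP: yKR => k r kK rR ->; rewrite commgMJ.
have hk : commute h k by have := centP (subsetP sHC h hH) k kK; move/esym.
move/commgP/eqP: hk => ->.
by rewrite conj1g mulg1 mem_commg.
Qed.

Lemma C2 (gT : finGroupType) (H K R : {set gT}) :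
  H \subset 'C(K) -> R \subset 'N(K) -> [~: H, R] \subset 'C(K).
Proof.
move=> sHC nKR; apply: subset_trans (commSg R sHC) _.
apply: subset_trans (commgS _ (subset_gen R)) _.
rewrite (commg_subl [group of 'C(K)] [group of <<R>>]) /=.
by rewrite gen_subG norms_cent.
Qed.

Lemma iter_sub (gT : finGroupType) n (H H' K R : {set gT}) :
  H \subset 'C(K) -> H \subset H' -> R \subset 'N(K) ->
  iter_comm H (K * R) n \subset iter_comm H' R n :&: 'C(K).
Proof.
move=> sHC sHH nKR; elim: n => [|n IH] /=; first by rewrite subsetI sHH.
have [s1 s2] : iter_comm H (K * R) n \subset iter_comm H' R n /\
               iter_comm H (K * R) n \subset 'C(K).
  by split; apply: subset_trans IH _; rewrite ?subsetIl ?subsetIr.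
rewrite subsetI; apply/andP; split.
  by apply: subset_trans (C1 _ s2) _; apply: commSg.
by apply: subset_trans (C1 _ s2) _; apply: C2.
Qed.

Lemma iter1 (gT : finGroupType) n (H B : {set gT}) :
  iter_comm H B n \subset [1] -> forall m, n <= m -> iter_comm H B m \subset [1].
Proof.
move=> h m; elim: m => [|m IH]; first by rewrite leqn0 => /eqP <-.
rewrite leq_eqVlt => /orP[/eqP <- // | ltm] /=.
apply: subset_trans (commSg _ (IH ltm)) _.
by rewrite comm1G.
Qed.

Lemma iter_eq1 (gT : finGroupType) n (H B : {set gT}) :
  iter_comm H B n.+1 \subset [1] -> iter_comm H B n.+1 == 1.
Proof. by rewrite /= subG1. Qed.

Canonical Omega1_group (gT : finGroupType) p (A : {set gT}) : {group gT} :=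
  Eval hnf in [group of Omega1 p A].

Lemma Omega1_sub (gT : finGroupType) p (A : {group gT}) : Omega1 p A \subset A.
Proof. by rewrite gen_subG; apply/subsetP => x; rewrite inE => /andP[]. Qed.

Lemma Omega1S (gT : finGroupType) p (A B : {set gT}) :
  A \subset B -> Omega1 p A \subset Omega1 p B.
Proof.
move=> sAB; apply: genS; apply/subsetP => x; rewrite !inE => /andP[xA ->].
by rewrite (subsetP sAB).
Qed.

Lemma Omega1_norm (gT : finGroupType) p (S A : {group gT}) :
  S \subset 'N(A) -> S \subset 'N(Omega1 p A).
Proof.
move=> nAS; apply: norms_gen; apply/subsetP => g gS; rewrite inE.
apply/subsetP => y; rewrite mem_conjg !inE => /andP[yA oy].
rewrite orderJ in oy; rewrite oy andbT.
by rewrite -(normP (subsetP nAS g gS)) mem_conjg.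
Qed.

Lemma admbP (gT : finGroupType) p (S K : {group gT}) :
  oliver_admissibleb p S K = true <-> oliver_admissible p S K.
Proof. by rewrite /oliver_admissibleb; case: excluded_middle_informative. Qed.

Lemma adm_normal (gT : finGroupType) p (S K : {group gT}) :
  oliver_admissible p S K -> K <| S.
Proof.
rewrite /oliver_admissible => -[s /and3P[ns _ /eqP <-]].
have := mem_last 1%G s; rewrite inE => /orP[/eqP -> | ]; first exact: normal1.
by move/(allP ns).
Qed.

Lemma adm1 (gT : finGroupType) p (S : {group gT}) : oliver_admissible p S 1%G.
Proof. rewrite /oliver_admissible. by exists [::]; rewrite /= eqxx. Qed.

Lemma step_join (gT : finGroupType) p (S K x y : {group gT}) :
  K <| S -> x <| S -> y <| S -> oliver_step p S x y ->
  oliver_step p S (K <*> x)%G (K <*> y)%G.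
Proof.
move=> nK nx ny /andP[sxy I]; apply/andP; split.
  by rewrite join_subG joing_subl (subset_trans sxy) ?joing_subr.
have nKy : y \subset 'N(K) := subset_trans (normal_sub ny) (normal_norm nK).
rewrite /= (norm_joinEr nKy).
set H := Omega1 p _.
have sHC : H \subset 'C(K).
  apply: subset_trans (Omega1_sub _ _) _.
  by rewrite subIset // orbC centS // joing_subl.
have sHH : H \subset Omega1 p 'C_S(x).
  by apply: Omega1S; rewrite setIS // centS // joing_subr.
have := iter_sub p.-1 sHC sHH nKy; move/eqP: I; case: p.-1 => [|n] /= -> h.
  by rewrite -subG1 (subset_trans h) // subsetIl.
by rewrite -subG1 (subset_trans h) // subsetIl.
Qed.

Lemma adm_join (gT : finGroupType) p (S K1 K2 : {group gT}) :
  oliver_admissible p S K1 -> oliver_admissible p S K2 ->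
  oliver_admissible p S (K1 <*> K2)%G.
Proof.
move=> a1 a2; have nK1 := adm_normal a1.
move: a1 a2; rewrite /oliver_admissible => -[s1 /and3P[n1 p1 /eqP l1]] [s2 /and3P[n2 p2 /eqP l2]].
have e1 : joinG K1 1%G = K1 by apply: val_inj; rewrite /= joingG1.
exists (s1 ++ map (joinG K1) s2).
rewrite all_cat n1 /= all_map cat_path p1 l1 last_cat l1.
have -> : path (oliver_step p S) K1 (map (joinG K1) s2) =
          path (oliver_step p S) (joinG K1 1%G) (map (joinG K1) s2) by rewrite e1.
have -> : last K1 (map (joinG K1) s2) = last (joinG K1 1%G) (map (joinG K1) s2)
  by rewrite e1.
rewrite last_map l2 eqxx path_map andbT /=.
apply/andP; split.
  apply/allP => Q QS /=; apply: normalY => //; exact: (allP n2).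
apply: (@sub_in_path _ [pred Q : {group gT} | Q <| S] _ _ _ _ _ _ p2).
  by move=> x y; rewrite !inE => nx ny; apply: step_join.
by rewrite /= normal1.
Qed.

Lemma adm_ext (gT : finGroupType) p (S K Q : {group gT}) :
  oliver_admissible p S K -> Q <| S -> K \subset Q ->
  iter_comm (Omega1 p 'C_S(K)) Q p.-1 == 1 -> oliver_admissible p S Q.
Proof.
rewrite /oliver_admissible => -[s /and3P[n1 p1 /eqP l1]] nQ sKQ I.
exists (rcons s Q).
by rewrite -cats1 all_cat n1 /= nQ cats1 rcons_path p1 l1 /oliver_step sKQ I last_rcons eqxx.
Qed.

Lemma X_max (gT : finGroupType) p (S : {group gT}) :
  exists K : {group gT}, [/\ oliver_admissible p S K,
    oliver_subgroup p S = K & forall K', oliver_admissible p S K' -> K' \subset K].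
Proof.
have a1 : oliver_admissibleb p S 1%G by apply/admbP; apply: adm1.
case: (arg_maxnP (fun K : {group gT} => #|K|) a1) => K /admbP aK maxK.
have mK : forall K', oliver_admissible p S K' -> K' \subset K.
  move=> K' aK'; have aJ := adm_join aK aK'.
  have le := maxK _ (proj2 (admbP _ _ _) aJ).
  have : K == (K <*> K')%G :> {set gT}.
    by rewrite eqEcard joing_subl; exact: le.
  by move/eqP => ->; rewrite joing_subr.
exists K; split => //.
apply/eqP; rewrite eqEsubset; apply/andP; split.
  by rewrite gen_subG; apply/bigcupsP => K' /admbP; apply: mK.
apply: subset_trans (subset_gen _).
by apply: (bigcup_sup K (proj2 (admbP _ _ _) aK)).
Qed.

Lemma iter_p (gT : finGroupType) p (H B : {set gT}) :
  2 < p -> [~: [~: H, B], B] \subset [1] -> iter_comm H B p.-1 == 1.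
Proof.
move=> p2 h; have h2 : iter_comm H B 2 \subset [1] by exact: h.
case: p p2 => [|[|q]] // p2 /=.
apply: iter_eq1; exact: (iter1 h2).
Qed.

Lemma cent_sub (gT : finGroupType) p (S K : {group gT}) :
  prime p -> odd p -> p.-group S -> oliver_admissible p S K ->
  (forall K', oliver_admissible p S K' -> K' \subset K) -> 'C_S(K) \subset K.
Proof.
move=> pr op pS aK mK; have nK := adm_normal aK.
have p2 := odd_prime_gt2 op pr.
have nCS : 'C_S(K) <| S.
  by have := subcent_normal S K; rewrite (setIidPl (normal_norm nK)).
have /ucnP[n Zn] := pgroup_nil pS.
suff h : forall i, 'C_S(K) :&: 'Z_i(S) \subset K.
  by have := h n; rewrite Zn (setIidPl (subsetIl _ _)).
elim=> [|i IH]; first by rewrite ucn0 subIset // orbC sub1G.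
have nR : 'C_S(K) :&: 'Z_i.+1(S) <| S := normalI nCS (ucn_normal _ _).
set R := [group of 'C_S(K) :&: 'Z_i.+1(S)] in nR *.
have nKR : R \subset 'N(K) := subset_trans (normal_sub nR) (normal_norm nK).
have sRC : R \subset 'C(K) by rewrite /= -setIA subIset // subsetIl orbT.
set V := Omega1 p 'C_S(K).
have sVC : V \subset 'C(K) by apply: subset_trans (Omega1_sub _ _) _; apply: subsetIr.
have sVS : V \subset S by apply: subset_trans (Omega1_sub _ _) _; apply: subsetIl.
suff sQ : (K <*> R)%G \subset K by apply: subset_trans sQ; apply: joing_subr.
apply: mK; apply: adm_ext aK (normalY nK nR) (joing_subl _ _) _.
rewrite /= (norm_joinEr nKR); apply: iter_p p2 _.
have := iter_sub 1 sVC (subxx V) nKR; rewrite /= => sT.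
have sTK : [~: V, K * R] \subset K.
  apply: subset_trans (IH); rewrite subsetI; apply/andP; split.
    rewrite subsetI (subset_trans sT (subsetIr _ _)) andbT.
    apply: subset_trans sT _; apply: subset_trans (subsetIl _ _) _.
    apply: subset_trans (commgSS sVS (normal_sub nR)) _.
    by rewrite commg_subl normG.
  apply: subset_trans sT _; apply: subset_trans (subsetIl _ _) _.
  apply: subset_trans (commgSS sVS (subsetIr _ _ : R \subset 'Z_i.+1(S))) _.
  by rewrite commGC ucn_comm.
suff -> : [~: [~: V, K * R], K * R] = 1 by []. apply/commG1P; rewrite centM subsetI (subset_trans sT (subsetIr _ _)) /=.
by apply: subset_trans sTK _; rewrite centsC.
Qed.

Lemma J_sub (gT : finGroupType) p (S : {group gT}) : thompson_J p S \subset S.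
Proof.
rewrite gen_subG; apply/bigcupsP => E; case/pnElemP => sES _ _ //.
Qed.

Lemma J_norm (gT : finGroupType) p (S : {group gT}) : S \subset 'N(thompson_J p S).
Proof.
apply: norms_gen; apply/subsetP => g gS; rewrite inE.
apply/subsetP => y; rewrite mem_conjg => /bigcupP[E EE yE].
apply/bigcupP; exists (E :^ g)%G.
  by rewrite -(pnElemJ g) (conjGid gS) in EE.
by rewrite mem_conjg.
Qed.

Canonical J_group (gT : finGroupType) p (S : {group gT}) : {group gT} :=
  Eval hnf in [group of thompson_J p S].


Theorem corollary3p4 (p : nat) (gT : finGroupType) (S : {group gT}) :
  prime p -> odd p -> p.-group S ->
  #|thompson_J p S * oliver_subgroup p S : oliver_subgroup p S| != p.
Proof.
move=> pr op pS; have [K [aK -> mK]] := X_max p S.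
have nK := adm_normal aK; have cK := cent_sub pr op pS aK mK.
have p2 := odd_prime_gt2 op pr; have p0 := prime_gt0 pr.
have nKS := normal_norm nK.
set J := thompson_J p S.
have sJS : J \subset S := J_sub p S.
have nJS : S \subset 'N(J) := J_norm p S.
have nKJ : J \subset 'N(K) := subset_trans sJS nKS.
apply/negP => /eqP idx.
have [sJK | nsJK] := boolP (J \subset K).
  by move: idx; rewrite (mulSGid sJK) indexgg => p1; rewrite -p1 in pr.
have : ~~ [forall (E : {group gT} | E \in 'E_p^('r_p(S))(S)), E \subset K].
  apply: contra nsJK => /forall_inP h; rewrite gen_subG; apply/bigcupsP => E /h //.
rewrite negb_forall_in => /exists_inP[E EE nsEK].
have sEJ : E \subset J.
  by apply: subset_trans (subset_gen _); apply: (bigcup_sup E EE).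
case/pnElemP: EE => sES abE lE.
have nKE : E \subset 'N(K) := subset_trans sES nKS.
have eEK : E * K = J * K.
  rewrite -(norm_joinEl nKE) -(norm_joinEl nKJ); apply/eqP; rewrite eqEcard.
  have sEKJK : (E <*> K)%G \subset (J <*> K)%G.
    by rewrite join_subG joing_subr (subset_trans sEJ) ?joing_subl.
  rewrite sEKJK /=.
  have LE := Lagrange (joing_subr E K); have LJ := Lagrange (joing_subr J K).
  have eJK : J <*> K = J * K := norm_joinEl nKJ.
  rewrite /= eJK idx -eJK in LJ.
  have d : #|E <*> K : K| %| p.
    have := cardSg sEKJK; rewrite /= -LE -LJ dvdn_pmul2l //.
  have n1 : #|E <*> K : K| != 1%N.
    apply: contra nsEK => /eqP /(index1g (joing_subr E K)) eK.
    by rewrite eK joing_subl.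
  move/(prime_nt_dvdP pr n1): d => d.
  by rewrite -LJ -LE d.
have nCS : 'C_S(K) <| S.
  by have := subcent_normal S K; rewrite (setIidPl nKS).
set C := 'C_S(K) in nCS cK.
set V := Omega1 p C.
have sVC0 : V \subset C := Omega1_sub p _.
have sVC : V \subset 'C(K) by apply: subset_trans sVC0 (subsetIr _ _).
have sVS : V \subset S by apply: subset_trans sVC0 (subsetIl _ _).
have pC : p.-group C := pgroupS (subsetIl _ _) pS.
have abC : abelian C.
  by rewrite abelianE (subset_trans (subsetIr _ _)) // centS.
have abV : p.-abelem V.
  have h : V \subset 'Ohm_1(C).
    rewrite (OhmE 1 pC); apply: genS; apply/subsetP => x.
    by rewrite !inE => /andP[-> /eqP ox]; rewrite expn1 -ox expg_order eqxx.
  exact: abelemS h (Ohm1_abelem pC abC).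
set CEV := 'C_E(V).
have cW : CEV \subset 'C(V) := subsetIr _ _.
have abCEV : p.-abelem CEV := abelemS (subsetIl _ _) abE.
set W := (V <*> CEV)%G.
have eW : V <*> CEV = V * CEV := cent_joinEr cW.
have sWS : W \subset S by rewrite join_subG sVS (subset_trans (subsetIl _ _)).
have pW : p.-group W := pgroupS sWS pS.
have abW0 : abelian W.
  by rewrite abelianY (abelem_abelian abV) (abelem_abelian abCEV) cW.
have abW : p.-abelem W.
  apply/(abelem_Ohm1P abW0 pW); apply/eqP; rewrite eqEsubset Ohm_sub /=.
  rewrite join_subG; apply/andP; split.
    by have := OhmS 1 (joing_subl (Omega1_group p C) [group of CEV]); rewrite (Ohm1_id abV).
  by have := OhmS 1 (joing_subr (Omega1_group p C) [group of CEV]); rewrite (Ohm1_id abCEV).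
have lW : logn p #|W| <= logn p #|E|.
  by rewrite lE; apply: logn_le_p_rank; apply/pElemP.
have pE : p.-group E := abelem_pgroup abE.
have cWE : #|W| <= #|E|.
  by rewrite (card_pgroup pW) (card_pgroup pE) leq_pexp2l.
have mc := mul_cardG (Omega1_group p C) [group of CEV].
rewrite /= -eW in mc.
have sEKC : E :&: K \subset CEV by rewrite setIS // centsC.
have iEK : #|E : E :&: K| = p.
  rewrite indexgI -indexMg -idx -eEK; congr #|_ : _|; exact: (esym (normC nKE)).
have iE : #|E : CEV| <= p.
  rewrite -iEK; apply: dvdn_leq; first by rewrite iEK.
  exact: (indexgS E sEKC).
have LE := Lagrange (subsetIl E 'C(V) : CEV \subset E).
set U := 'C_V(E).
have sVU : V :&: CEV \subset U.
  rewrite subsetI subsetIl /= subIset // orbC (subset_trans (subsetIl _ _)) //.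
  by rewrite -abelianE (abelem_abelian abE).
have cVU := subset_leq_card sVU.
have LV := Lagrange (subsetIl V 'C(E) : U \subset V).
have cU0 : 0 < #|U| by rewrite cardG_gt0.
have cC0 : 0 < #|CEV| by rewrite cardG_gt0.
have iVU : #|V : U| <= p.
  have h1 : #|V| * #|CEV| <= #|CEV| * p * #|U|.
    rewrite mc; apply: leq_trans (leq_mul cWE cVU) _.
    by rewrite -LE leq_mul // leq_mul.
  have h2 : #|V| <= p * #|U|.
    rewrite -(leq_pmul2r cC0); apply: leq_trans h1 _.
    by rewrite (mulnC (p * _)%N) mulnA.
  move: h2; rewrite -LV mulnC leq_pmul2r //.
have nUV : V \subset 'N(U) := sub_abelian_norm (abelem_abelian abV) (subsetIl _ _).
have nVE : E \subset 'N(V).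
  apply: subset_trans sES _; apply: Omega1_norm; exact: normal_norm nCS.
have nUE : E \subset 'N(U) := normsI nVE (norms_cent (normG E)).
have sG0S : (Omega1_group p C <*> E)%G \subset S by rewrite join_subG sVS sES.
have nil0 : nilpotent ((Omega1_group p C <*> E)%G / U).
  by apply: (pgroup_nil (p := p)); apply: quotient_pgroup; apply: pgroupS sG0S pS.
have cVE : [~: V, E] \subset U.
  have nUc : [~: V, E] \subset 'N(U).
    apply: subset_trans nUV.
    by rewrite (commg_subl (Omega1_group p C) E).
  rewrite -(quotient_sub1 nUc) (quotientR nUV nUE).
  have sHG : V / U \subset (Omega1_group p C <*> E)%G / U by apply: quotientS; apply: joing_subl.
  have sAN : E / U \subset 'N_((Omega1_group p C <*> E)%G / U)(V / U).
    rewrite subsetI quotient_norms // andbT; apply: quotientS; apply: joing_subr.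
  have [triv | ntH] := eqVneq ((Omega1_group p C) / U)%G 1%G.
    have : [~: V / U, E / U] \subset V / U.
      by rewrite (commg_subl _ ((E / U)%G)) quotient_norms.
    by move/subset_trans; apply; move/(congr1 val): triv => /= ->.
  have pr0 := nil_comm_properl nil0 sHG ntH sAN.
  have pc : p.-group [~: V / U, E / U].
    apply: pgroupS (proper_sub pr0) _; apply: quotient_pgroup; exact: pgroupS sVS pS.
  have lt := proper_card pr0.
  rewrite card_quotient // in lt.
  have := card_pgroup pc; case: (logn p _) => [|j] e.
    by rewrite subG1 trivg_card1 e.
  have := leq_trans lt iVU; rewrite e expnS.
  by rewrite ltnNge leq_pmulr // expn_gt0 p0.
have nJ : J <| S by rewrite /normal sJS nJS.
have nQ := normalY nJ nK.
have aQ := adm_ext aK nQ (joing_subr J K) (_ : _).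
have sQK : J <*> K \subset K.
  apply: (mK (J_group p S <*> K)%G); apply: aQ.
  rewrite /= (norm_joinEl nKJ) -eEK (normC nKE).
  apply: iter_p p2 _.
  have s1 : [~: V, K * E] \subset U := subset_trans (C1 _ sVC) cVE.
  have sUV : U \subset V := subsetIl _ _.
  have sUC : U \subset 'C(K) := subset_trans sUV sVC.
  apply: subset_trans (commSg _ s1) _.
  apply: subset_trans (C1 _ sUC) _.
  by have /commG1P -> : U \subset 'C(E) := subsetIr _ _.
by move/negP: nsJK; apply; apply: subset_trans sQK; apply: joing_subl.
Qed.
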